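(* Let $w,v\in\Sigma^+$ be primitive words. The following are equivalent: (1) $w$ and $v$ are co-primitive; (2) there exist $n_0,m_0\in\mathbb{N}$ such that $\mathsf{Facs}(w^{n_0})\cap\mathsf{Facs}(v^{m_0})=\mathsf{Facs}(w^{n})\cap\mathsf{Facs}(v^{m})$ for all $n>n_0$ and all $m>m_0$; (3) there exists $r\in\mathbb{N}$ such that $r\ge\max\{|x| : x\in\mathsf{Facs}(w^n)\cap\mathsf{Facs}(v^m)\}$ for all $n,m\in\mathbb{N}$.
   Context: $\mathsf{Facs}(w)$ is the set of all factors of $w$. A word $w\in\Sigma^+$ is primitive if there is no $z\in\Sigma^*$ and $k>1$ with $w=z^k$. Two words $w,v\in\Sigma^+$ are conjugate if there exist $x,y\in\Sigma^*$ with $w=xy$ and $v=yx$. Two words are co-primitive if both are primitive and they are not conjugate. *)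

(* Defs.v *)
From mathcomp Require Import all_boot.
Set Implicit Arguments. Unset Strict Implicit. Unset Printing Implicit Defensive.

Definition wpow (Sigma : eqType) (w : seq Sigma) (k : nat) : seq Sigma :=
  flatten (nseq k w).

Definition Facs (Sigma : eqType) (w : seq Sigma) : pred (seq Sigma) :=
  fun x => infix x w.

Definition primitive (Sigma : eqType) (w : seq Sigma) : Prop :=
  w != [::] /\ ~ (exists (z : seq Sigma) (k : nat), 1 < k /\ w = wpow z k).

Definition conjugate (Sigma : eqType) (w v : seq Sigma) : Prop :=
  exists x y : seq Sigma, w = x ++ y /\ v = y ++ x.

Definition co_primitive (Sigma : eqType) (w v : seq Sigma) : Prop :=
  primitive w /\ primitive v /\ ~ conjugate w v.

(* Main.v *)
Require Import Defs.
From mathcomp Require Import all_boot.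
From mathcomp Require Import zify.

Section Aux.
Set Implicit Arguments.
Variables (Sigma : eqType) (d : Sigma).

Lemma wpowS (w : seq Sigma) n : wpow w n.+1 = w ++ wpow w n.
Proof. by []. Qed.

Lemma size_wpow (w : seq Sigma) n : size (wpow w n) = n * size w.
Proof. elim: n => [|n IH] //; by rewrite wpowS size_cat IH mulSn. Qed.

Lemma wpowD (w : seq Sigma) m n : wpow w (m + n) = wpow w m ++ wpow w n.
Proof. elim: m => [|m IH] //; by rewrite addSn !wpowS IH catA. Qed.

Lemma nth_wpow (w : seq Sigma) n i : i < n * size w ->
  nth d (wpow w n) i = nth d w (i %% size w).
Proof.
elim: n i => [|n IH] i; first by rewrite mul0n.
rewrite mulSn wpowS nth_cat => Hi.
case: ifP => Hip; first by rewrite modn_small.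
have -> : i %% size w = (i - size w) %% size w.
  have Hle : size w <= i by rewrite leqNgt Hip.
  by rewrite -{1}(subnK Hle) modnDr.
apply: IH; lia.
Qed.

Definition pf (w x : seq Sigma) := exists a, forall i, i < size x ->
  nth d x i = nth d w ((a + i) %% size w).

Lemma infix_pf (w x : seq Sigma) n : infix x (wpow w n) -> pf w x.
Proof.
move/infixP=> [s [s' E]]; exists (size s) => i Hi.
have Hs := size_wpow w n; rewrite E !size_cat in Hs.
rewrite -(@nth_wpow w n); last lia.
by rewrite E nth_cat ifN ?addKn ?nth_cat ?Hi //; lia.
Qed.

Lemma nth_infix (s x : seq Sigma) a : a + size x <= size s ->
  (forall i, i < size x -> nth d x i = nth d s (a + i)) -> infix x s.
Proof.
move=> Hs Hn.
have -> : x = take (size x) (drop a s).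
  apply: (@eq_from_nth _ d); first by rewrite size_takel // size_drop; lia.
  move=> i Hi; by rewrite nth_take // nth_drop Hn.
apply: infix_trans (infix_take _ _) (infix_drop _ _).
Qed.

Lemma pf_infix (w x : seq Sigma) k : 0 < size w -> pf w x -> size x < k ->
  infix x (wpow w k).
Proof.
move=> Hp [a Ha] Hk.
apply: (@nth_infix _ _ (a %% size w)).
  rewrite size_wpow. have := ltn_pmod a Hp. nia.
move=> i Hi; rewrite Ha // nth_wpow; last by have := ltn_pmod a Hp; nia.
by rewrite modnDml.
Qed.

Lemma infix_wpow_mono (w x : seq Sigma) m n : m <= n ->
  infix x (wpow w m) -> infix x (wpow w n).
Proof.
move=> Hmn H; rewrite -(subnKC Hmn) wpowD; exact: infix_catr.
Qed.

Lemma wpow_conj (x y : seq Sigma) n :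
  wpow (y ++ x) n.+1 = y ++ wpow (x ++ y) n ++ x.
Proof.
elim: n => [|n IH]; first by rewrite /wpow /= !cats0.
by rewrite wpowS IH wpowS -!catA.
Qed.

Definition per (g : nat) (h : nat -> Sigma) := forall i, h (i + g) = h i.

Lemma per_iter h g : per g h -> forall k i, h (i + k * g) = h i.
Proof.
move=> H; elim=> [|k IH] i; first by rewrite addn0.
by rewrite mulSn addnA IH H.
Qed.

Lemma per_mod h g : per g h -> forall i, h i = h (i %% g).
Proof. move=> H i; by rewrite {1}(divn_eq i g) addnC per_iter. Qed.

Definition fw (w : seq Sigma) i := nth d w (i %% size w).

Lemma per_fw w : per (size w) (fw w).
Proof. by move=> i; rewrite /fw modnDr. Qed.

Lemma shift_per (F : nat -> Sigma) p g a : 0 < p -> per p F ->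
  per g (fun i => F (a + i)) -> per g F.
Proof.
move=> Hp HF Hg j.
have E1 : forall m, F m = F (a + (m + a * (p - 1))).
  move=> m; rewrite -(per_iter HF a m); congr F; nia.
rewrite (E1 j) (E1 (j + g)) -(Hg (j + a * (p - 1))); congr F; nia.
Qed.

Lemma FW (h k : nat -> Sigma) p q L : 0 < p -> 0 < q -> p + q <= L ->
  per p h -> per q k -> (forall i, i < L -> h i = k i) -> per (gcdn p q) h.
Proof.
move=> Hp Hq HL Hh Hk Heq.
have Hq' : per q h.
  move=> i.
  have -> : h (i + q) = h (i %% p + q).
    by rewrite (per_mod Hh (i + q)) (per_mod Hh (i %% p + q)) modnDml.
  have Hi := ltn_pmod i Hp.
  rewrite (per_mod Hh i) Heq; last lia.
  by rewrite Hk -Heq //; lia.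
move=> i; case: (Bezoutl q Hp) => c _ /dvdnP [e He].
by rewrite -(per_iter Hq' c) -addnA He per_iter.
Qed.

Lemma prim_period (w : seq Sigma) g : primitive w -> 0 < g -> g %| size w ->
  per g (fw w) -> g = size w.
Proof.
move=> [Hne Hprim] Hg Hdv Hper.
have Hp : 0 < size w by case: w Hne Hprim Hdv Hper.
have Hle := dvdn_leq Hp Hdv.
case: (ltngtP g (size w)) => Hlt; [ | lia | by [] ]; exfalso; apply: Hprim.
exists (take g w), (size w %/ g); split.
  move: Hdv => /dvdnP [k Hk]; rewrite Hk mulnK //.
  case: k Hk => [|[|k]] Hk //; [ by rewrite Hk in Hp | by rewrite Hk mul1n ltnn in Hlt ].
have Hsz : size (take g w) = g by rewrite size_take Hlt.
apply: (@eq_from_nth _ d).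
  by rewrite size_wpow Hsz divnK.
move=> i Hi; rewrite nth_wpow; last by rewrite Hsz divnK.
rewrite Hsz nth_take ?ltn_pmod //.
have Hig := ltn_pmod i Hg.
have := per_mod Hper i; rewrite /fw.
by rewrite (modn_small Hi) (modn_small (ltn_trans Hig Hlt)).
Qed.

Lemma main_bound (w v x : seq Sigma) : primitive w -> primitive v ->
  ~ conjugate w v -> pf w x -> pf v x -> size x < size w + size v.
Proof.
move=> Pw Pv Nc [a Ha] [b Hb].
have Hp : 0 < size w by case: Pw; case: (w).
have Hq : 0 < size v by case: Pv; case: (v).
rewrite ltnNge; apply/negP => HL.
set h := fun i => fw w (a + i).
set k := fun i => fw v (b + i).
have Hh : per (size w) h by move=> i; rewrite /h addnA per_fw.
have Hk : per (size v) k by move=> i; rewrite /k addnA per_fw.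
have Heq : forall i, i < size x -> h i = k i.
  by move=> i Hi; rewrite /h /k /fw -Ha // -Hb.
have G1 := @FW h k _ _ (size x) Hp Hq HL Hh Hk Heq.
have G2 : per (gcdn (size v) (size w)) k.
  apply: (@FW k h _ _ (size x) Hq Hp _ Hk Hh) => [|i Hi]; [lia | by rewrite Heq].
have E1 : gcdn (size w) (size v) = size w.
  apply: prim_period => //; first by rewrite gcdn_gt0 Hp.
    exact: dvdn_gcdl.
  exact: shift_per Hp (per_fw w) G1.
have E2 : gcdn (size v) (size w) = size v.
  apply: prim_period => //; first by rewrite gcdn_gt0 Hq.
    exact: dvdn_gcdl.
  exact: shift_per Hq (per_fw v) G2.
have Epq : size v = size w by rewrite -E2 gcdnC E1.
rewrite Epq in Hk G2 HL.
have Hall : forall i, h i = k i.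
  move=> i; rewrite (per_mod Hh) (per_mod Hk) Heq //.
  have := ltn_pmod i Hp; lia.
apply: Nc.
set s := (a + b * (size w - 1)) %% size w.
have Hs : s < size w by apply: ltn_pmod.
have Hv : forall j, j < size w -> nth d v j = nth d w ((s + j) %% size w).
  move=> j Hj.
  have : fw v j = fw w (j + s).
    rewrite -(per_iter (per_fw v) b j).
    have -> : j + b * size v = b + (j + b * (size w - 1)) by rewrite Epq; nia.
    rewrite -/(k _) -Hall /h /fw modnDmr; congr nth; congr modn; nia.
  by rewrite /fw Epq modn_small // addnC.
exists (take s w), (drop s w); split; first by rewrite cat_take_drop.
apply: (@eq_from_nth _ d).
  rewrite size_cat size_take size_drop Hs Epq; lia.
move=> j; rewrite Epq => Hj; rewrite Hv // nth_cat size_drop.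
case: ifP => Hjs.
  by rewrite nth_drop modn_small //; lia.
rewrite nth_take; last lia.
have -> : s + j = (j - (size w - s)) + size w by lia.
by rewrite modnDr modn_small //; lia.
Qed.

End Aux.

Theorem lemma4p11 (Sigma : finType) (w v : seq Sigma) :
  primitive w -> primitive v ->
  (co_primitive w v <->
   (exists n0 m0 : nat, forall n m : nat, n0 < n -> m0 < m ->
      forall x : seq Sigma,
        (Facs (wpow w n0) x && Facs (wpow v m0) x) =
        (Facs (wpow w n) x && Facs (wpow v m) x)))
  /\
  (co_primitive w v <->
   (exists r : nat, forall n m : nat, forall x : seq Sigma,
      Facs (wpow w n) x -> Facs (wpow v m) x -> size x <= r)).
Proof.
move=> Pw Pv.
have [d Hd] : exists d : Sigma, w = d :: behead w.
  by case: Pw; case: (w) => // d' w' _ _; exists d'.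
have Hp : 0 < size w by rewrite Hd.
have Hq : 0 < size v by case: Pv; case: (v).
have Bnd : co_primitive w v -> forall n m x, infix x (wpow w n) ->
    infix x (wpow v m) -> size x < size w + size v.
  move=> [_ [_ Nc]] n m x H1 H2.
  exact: (main_bound Pw Pv Nc (infix_pf _ d _ _ _ H1) (infix_pf _ d _ _ _ H2)).
have Unb : conjugate w v -> forall n, infix (wpow w n) (wpow v n.+1).
  move=> [x [y [-> ->]]] n; rewrite wpow_conj; exact: infix_infix.
rewrite /Facs; split; split.
- move=> CP; exists (size w + size v), (size w + size v) => n m Hn Hm x.
  apply/idP/idP => /andP [H1 H2]; apply/andP; split.
  + exact: (infix_wpow_mono _ _ _ _ _ (ltnW Hn) H1).
  + exact: (infix_wpow_mono _ _ _ _ _ (ltnW Hm) H2).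
  + by apply: (pf_infix _ Hp (infix_pf _ d _ _ _ H1)); exact: Bnd H1 H2.
  + by apply: (pf_infix _ Hq (infix_pf _ d _ _ _ H2)); exact: Bnd H1 H2.
- move=> [n0 [m0 H]]; do 2 split => //; move=> Hc.
  have h1 : n0 < (n0 + m0).+1 by lia.
  have h2 : m0 < (n0 + m0).+2 by lia.
  have := H (n0 + m0).+1 (n0 + m0).+2 h1 h2 (wpow w (n0 + m0).+1).
  rewrite infix_refl Unb // => /andP [H1 _].
  move: (size_infix H1); rewrite !size_wpow leq_pmul2r //; lia.
- move=> CP; exists (size w + size v) => n m x H1 H2.
  exact: ltnW (Bnd CP n m x H1 H2).
- move=> [r H]; do 2 split => //; move=> Hc.
  have := H r.+1 r.+2 (wpow w r.+1) (infix_refl _) (Unb Hc _).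
  rewrite size_wpow => /(leq_trans (leq_pmulr r.+1 Hp)); lia.
Qed.
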